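(* Let $\Sigma$ be a real symmetric positive semidefinite $n\times n$ matrix which is irreducible. If $\Sigma\preceq_e 0$, then ${\operatorname{mr}}(\Sigma)=n-1$, where \[{\operatorname{mr}}(\Sigma)=\min\{\operatorname{rank}(\hat\Sigma)\mid \Sigma=\tilde\Sigma+\hat\Sigma,\ \hat\Sigma\text{ real symmetric positive semidefinite},\ \tilde\Sigma\text{ real diagonal}\}.\]
   Context: A square matrix is irreducible if it cannot be brought into block-diagonal form (with at least two diagonal blocks) by a simultaneous permutation of its rows and columns. For a real square matrix $M$, $M\preceq_e 0$ means that the off-diagonal entries of $M$ are all $\le 0$, or can be made so by changing the signs of selected rows and the corresponding columns (i.e. there is a diagonal matrix $P$ with diagonal entries $\pm1$ such that $PMP$ has all off-diagonal entries $\le 0$). In the definition of ${\operatorname{mr}}$ the diagonal matrix $\tilde\Sigma$ is not required to be positive semidefinite. *)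

(* Defs.v *)
From HB Require Import structures.
From mathcomp Require Import all_boot all_order all_algebra all_fingroup.
From mathcomp Require Import boolp reals.
Set Implicit Arguments. Unset Strict Implicit. Unset Printing Implicit Defensive.
Import Order.TTheory GRing.Theory Num.Theory.
Local Open Scope ring_scope.

Section Defs.
Variables (R : realType) (n : nat).

Definition symmetric_mx (A : 'M[R]_n) : Prop := A^T = A.

Definition psd_mx (A : 'M[R]_n) : Prop :=
  forall x : 'cV[R]_n, 0 <= (x^T *m A *m x) 0 0.

(* A is reducible iff some simultaneous permutation of rows and columns
   brings it into block-diagonal form with two diagonal blocks of sizes
   k and n-k, 0 < k < n: the permuted matrix B i j := A (s i) (s j) has
   zero entries whenever exactly one of i, j lies in the first block. *)
Definition reducible_mx (A : 'M[R]_n) : Prop :=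
  exists (s : 'S_n) (k : nat), (0 < k < n)%N /\
    forall i j : 'I_n, ((i < k)%N != (j < k)%N) -> A (s i) (s j) = 0.

Definition irreducible_mx (A : 'M[R]_n) : Prop := ~ reducible_mx A.

Definition sign_diag_mx (d : 'I_n -> bool) : 'M[R]_n :=
  diag_mx (\row_i (if d i then -1 else 1)).

Definition preceq_e0 (A : 'M[R]_n) : Prop :=
  exists d : 'I_n -> bool, forall i j : 'I_n, i != j ->
    (sign_diag_mx d *m A *m sign_diag_mx d) i j <= 0.

Definition mr_rank (S : 'M[R]_n) (r : nat) : Prop :=
  exists St Sh : 'M[R]_n,
    is_diag_mx St /\ symmetric_mx Sh /\ psd_mx Sh /\ S = St + Sh /\ \rank Sh = r.

Lemma mr_rank_ex (S : 'M[R]_n) : psd_mx S -> symmetric_mx S ->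
  exists r, `[< mr_rank S r >].
Proof.
move=> Hp Hs; exists (\rank S); apply/asboolP.
exists 0, S; split; first by apply/is_diag_mxP => i j _; rewrite mxE.
by rewrite add0r.
Qed.

End Defs.

(* minimum rank; defined only for symmetric PSD Sigma (the set is then
   nonempty: Sigma = 0 + Sigma). *)
Definition mr (R : realType) (n : nat) (S : 'M[R]_n)
  (Hp : psd_mx S) (Hs : symmetric_mx S) : nat :=
  ex_minn (mr_rank_ex Hp Hs).

(* Main.v *)
Require Import Defs.
From mathcomp Require Import all_boot all_order all_algebra all_fingroup.
From mathcomp Require Import boolp reals.
From mathcomp Require Import ring lra zify.
Import Order.TTheory GRing.Theory Num.Theory.
Local Open Scope ring_scope.
Set Implicit Arguments. Unset Strict Implicit.
Section Aux.
Variable R : realType.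

Definition sgn n (d : 'I_n -> bool) (i : 'I_n) : R := if d i then -1 else 1.

Arguments sgn {n}.
Lemma sgnK n d (i : 'I_n) : sgn d i * sgn d i = 1.
Proof. by rewrite /sgn; case: (d i); rewrite ?mulN1r ?opprK ?mulr1. Qed.

Lemma signE n d (A : 'M[R]_n) i j :
  (sign_diag_mx R d *m A *m sign_diag_mx R d) i j = sgn d i * A i j * sgn d j.
Proof. by rewrite /sign_diag_mx mul_diag_mx mul_mx_diag !mxE. Qed.

Definition qf n (A : 'M[R]_n) (f : 'I_n -> R) := \sum_i \sum_j f i * A i j * f j.
Definition bf n (A : 'M[R]_n) (f g : 'I_n -> R) := \sum_i \sum_j f i * A i j * g j.

Arguments qf {n}. Arguments bf {n}.
Lemma psdE n (A : 'M[R]_n) : psd_mx A -> forall f, 0 <= qf A f.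
Proof.
move=> H f; have := H (\col_i f i).
rewrite mxE.
under eq_bigr do rewrite mxE.
under eq_bigr do under eq_bigr do rewrite !mxE.
rewrite /qf exchange_big /=; under eq_bigr do rewrite mulr_suml.
by under eq_bigr do under eq_bigr do rewrite mxE.
Qed.

Lemma qf_exp n (A : 'M[R]_n) z w t :
  qf A (fun k => z k + t * w k) = qf A z + t * (bf A z w + bf A w z) + t^+2 * qf A w.
Proof.
rewrite /qf /bf.
transitivity (\sum_i \sum_j (z i * A i j * z j + t * (z i * A i j * w j + w i * A i j * z j) + t^+2 * (w i * A i j * w j))).
  apply: eq_bigr => i _; apply: eq_bigr => j _ /=.
  ring.
under eq_bigr do rewrite big_split /= big_split /= -!mulr_sumr big_split /=.
rewrite big_split /= big_split /= -!mulr_sumr big_split /=.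
by [].
Qed.

Lemma psd_ker n (A : 'M[R]_n) z : (forall i j, A i j = A j i) ->
  (forall f, 0 <= qf A f) -> qf A z = 0 -> forall j, \sum_i z i * A i j = 0.
Proof.
move=> Hs Hp H0 j.
pose e := fun k : 'I_n => (k == j)%:R : R.
have hb : bf A z e = \sum_i z i * A i j.
  rewrite /bf; apply: eq_bigr => i _.
  rewrite (bigD1 j) //= /e eqxx mulr1 big1 ?addr0 // => k /negbTE ->.
  by rewrite mulr0.
have hb' : bf A e z = bf A z e.
  rewrite /bf exchange_big; apply: eq_bigr => i _; apply: eq_bigr => k _.
  rewrite Hs; ring.
set b := \sum_i z i * A i j in hb *.
set c := qf A e.
have hc : 0 <= c by apply: Hp.
have key : forall t, 0 <= 2 * t * b + t^+2 * c.
  move=> t; have := Hp (fun k => z k + t * e k).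
  rewrite qf_exp H0 hb' hb => h.
  have -> : 2 * t * b + t^+2 * c = 0 + t * (b + b) + t^+2 * c by ring.
  exact: h.
pose t := - b / (c + 1).
have hu : c + 1 != 0 by rewrite gt_eqF //; lra.
have ht : b = - (t * (c + 1)) by rewrite /t divfK // opprK.
have := key t; rewrite ht => h.
have h2 : t^+2 * (c + 2) <= 0 by nra.
have h3 : t^+2 <= 0 by nra.
have : t = 0.
  apply/eqP; rewrite -sqrf_eq0; apply/eqP.
  by apply/le_anti; rewrite h3 sqr_ge0.
by move=> ->; rewrite mul0r oppr0.
Qed.

Lemma sgn_neq0 n d (i : 'I_n) : sgn d i != 0.
Proof. by rewrite /sgn; case: (d i); rewrite ?oppr_eq0 oner_eq0. Qed.

Lemma ker_nz n (M : 'M[R]_n) (d : 'I_n -> bool) (u : 'I_n -> R) :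
  (forall i j, M i j = M j i) -> (forall f, 0 <= qf M f) ->
  (forall i j, i != j -> sgn d i * M i j * sgn d j <= 0) ->
  (forall Z : {set 'I_n}, (forall x y, x \in Z -> y \notin Z -> M x y = 0) ->
      Z = set0 \/ Z = setT) ->
  (forall j, \sum_i u i * M i j = 0) ->
  forall i0, u i0 = 0 -> forall i, u i = 0.
Proof.
move=> Hs Hp Hsg Hirr Hu i0 hi0.
pose z := fun k => sgn d k * `|u k|.
have hqu : qf M u = 0.
  rewrite /qf exchange_big /=; apply: big1 => j _.
  by rewrite -mulr_suml Hu mul0r.
have hle : qf M z <= qf M u.
  rewrite /qf; apply: ler_sum => i _; apply: ler_sum => j _; rewrite /z.
  case: (eqVneq i j) => [<-|hij].
    have hs := sgnK d i.
    have hn : `|u i| * `|u i| = u i * u i.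
      by rewrite -normrM ger0_norm //; nra.
    have -> : sgn d i * `|u i| * M i i * (sgn d i * `|u i|) =
       (sgn d i * sgn d i) * (`|u i| * `|u i|) * M i i by ring.
    by rewrite hs hn mul1r mulrAC.
  have hc := Hsg i j hij.
  have h1 := ler_norm (u i * u j); rewrite normrM in h1.
  have h2 := ler_norm (- (u i * u j)); rewrite normrN normrM in h2.
  have h3 := normr_ge0 (u i); have h4 := normr_ge0 (u j).
  move: hc; rewrite /sgn; case: (d i); case: (d j) => hc; nra.
have hz0 : qf M z = 0.
  by apply/le_anti; rewrite (le_trans hle) ?hqu ?Hp.
have hzk := psd_ker Hs Hp hz0.
pose Z := [set i | u i == 0].
have hcl : forall x y, x \in Z -> y \notin Z -> M x y = 0.
  move=> x y; rewrite !inE => /eqP hx hy.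
  have ht : forall i, true -> 0 <= - (sgn d x * (z i * M i x)).
    move=> i _; rewrite /z; case: (eqVneq i x) => [->|hix].
      by rewrite hx normr0 mulr0 !mul0r mulr0 oppr0.
    have hxi : x != i by rewrite eq_sym.
    have hc := Hsg x i hxi.
    rewrite (Hs i x).
    have -> : - (sgn d x * (sgn d i * `|u i| * M x i)) =
      `|u i| * (- (sgn d x * M x i * sgn d i)) by ring.
    by apply: mulr_ge0; rewrite ?normr_ge0 // oppr_ge0.
  have hsum : \sum_i - (sgn d x * (z i * M i x)) = 0.
    by rewrite sumrN -mulr_sumr hzk mulr0 oppr0.
  have := psumr_eq0P ht hsum (i := y) isT.
  move/eqP; rewrite oppr_eq0 /z !mulf_eq0 (negbTE (sgn_neq0 d x)).
  rewrite (negbTE (sgn_neq0 d y)) normr_eq0 (negbTE hy) /=.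
  by rewrite Hs => /eqP.
have hi0Z : i0 \in Z by rewrite inE hi0.
case: (Hirr Z hcl) => hZ.
  by move: hi0Z; rewrite hZ inE.
move=> i; have : i \in Z by rewrite hZ inE.
by rewrite inE => /eqP.
Qed.

Lemma irr_sets n (S : 'M[R]_n) : (forall i j, S i j = S j i) -> irreducible_mx S ->
  forall Z : {set 'I_n}, (forall x y, x \in Z -> y \notin Z -> S x y = 0) ->
  Z = set0 \/ Z = setT.
Proof.
move=> Hs Hirr Z HZ.
case: (eqVneq Z set0) => [->|hZ0]; first by left.
case: (eqVneq Z setT) => [->|hZT]; first by right.
exfalso; apply: Hirr.
have /set0Pn [x0 hx0] := hZ0.
pose r := enum Z ++ enum (~: Z).
have hC := cardsC Z; rewrite card_ord in hC.
have hsz : size r = n by rewrite size_cat -!cardE.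
have hu : uniq r.
  rewrite cat_uniq !enum_uniq /= andbT; apply/hasPn => y.
  by rewrite !mem_enum inE.
pose f := fun i : 'I_n => nth x0 r i.
have finj : injective f.
  move=> i j /eqP; rewrite /f nth_uniq ?hsz ?ltn_ord // => /eqP.
  exact: val_inj.
pose s := perm finj.
have hmem : forall i : 'I_n, (s i \in Z) = (i < #|Z|)%N.
  move=> i; rewrite permE /f nth_cat -cardE; case: ifP => hi.
    by have := mem_nth x0 (s := enum Z) (n := i); rewrite mem_enum -cardE => ->.
  have hlt : (i - #|Z| < size (enum (~: Z)))%N.
    rewrite -cardE; have := ltn_ord i; move: hi; lia.
  by have := mem_nth x0 hlt; rewrite mem_enum inE => /negbTE.
have hk : (#|Z| < n)%N.
  have := proper_card (A := Z) (B := [set: 'I_n]).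
  by rewrite properT cardsT card_ord => ->.
exists s, #|Z|; split.
  by rewrite hk andbT lt0n cards_eq0.
move=> i j; case hi: (i < #|Z|)%N; case hj: (j < #|Z|)%N => //= _.
  by apply: HZ; rewrite hmem ?hi ?hj.
by rewrite Hs; apply: HZ; rewrite hmem ?hi ?hj.
Qed.

Lemma rank_lb m (A : 'M[R]_m.+1) :
  (forall u : 'rV[R]_m.+1, u *m A = 0 -> u 0 ord0 = 0 -> u = 0) -> (m <= \rank A)%N.
Proof.
move=> H.
pose E : 'M[R]_(m.+1, 1) := col ord0 1%:M.
pose K := kermx A. pose Hm := kermx E.
have hcap : \rank (K :&: Hm)%MS = 0%N.
  apply/eqP; rewrite mxrank_eq0; apply/eqP/row_matrixP => i; rewrite row0.
  set v := row i _.
  have hv : (v <= K :&: Hm)%MS by rewrite row_sub.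
  have hvK : (v <= K)%MS := submx_trans hv (capmxSl _ _).
  have hvH : (v <= Hm)%MS := submx_trans hv (capmxSr _ _).
  rewrite sub_kermx in hvK; rewrite sub_kermx in hvH; apply: H; first by apply/eqP.
  move/eqP/matrixP/(_ 0 0): hvH; rewrite !mxE => <-.
  rewrite (bigD1 ord0) //= !mxE eqxx mulr1 big1 ?addr0 // => k hk.
  by rewrite !mxE (negbTE hk) mulr0.
have := mxrank_sum_cap K Hm; rewrite hcap addn0 !mxrank_ker.
have := rank_leq_col (K + Hm)%MS.
have := rank_leq_col E.
have := rank_leq_row A.
lia.
Qed.

Lemma rank_ub m (A : 'M[R]_m.+1) (v : 'rV[R]_m.+1) :
  v != 0 -> v *m A = 0 -> (\rank A <= m)%N.
Proof.
move=> hv0 hv.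
have : (v <= kermx A)%MS by rewrite sub_kermx; apply/eqP.
move/mxrankS; rewrite mxrank_ker rank_rV hv0.
have := rank_leq_row A; lia.
Qed.

Lemma qfE n (A : 'M[R]_n) (x : 'cV[R]_n) :
  (x^T *m A *m x) 0 0 = qf A (fun i => x i 0).
Proof.
rewrite mxE.
under eq_bigr do rewrite mxE.
under eq_bigr do under eq_bigr do rewrite !mxE.
rewrite /qf exchange_big /=; under eq_bigr do rewrite mulr_suml.
by [].
Qed.

Lemma lb_m m (S : 'M[R]_m.+1) d : (forall i j, S i j = S j i) -> irreducible_mx S ->
  (forall i j, i != j -> sgn d i * S i j * sgn d j <= 0) ->
  forall r, mr_rank S r -> (m <= r)%N.
Proof.
move=> Hs' Hirr Hsgn r [St [Sh [hD [hsym [hpsd [hdec hr]]]]]].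
rewrite -hr; apply: rank_lb => u hu hu0.
have hShs : forall i j, Sh i j = Sh j i.
  by move=> i j; rewrite -{1}hsym mxE.
have hoff : forall i j, i != j -> Sh i j = S i j.
  by move=> i j h; rewrite hdec mxE (is_diag_mxP hD i j h) add0r.
apply/rowP => i; rewrite mxE.
apply: (@ker_nz _ Sh d (fun k => u 0 k) hShs (psdE hpsd) _ _ _ ord0 hu0).
- by move=> x y hxy; rewrite hoff //; apply: Hsgn.
- move=> Z hZ; apply: (irr_sets Hs' Hirr) => x y hx hy.
  have hxy : x != y by apply/eqP => hxy; move: hy; rewrite -hxy hx.
  by rewrite -hoff // hZ.
- by move=> j; move/matrixP: hu => /(_ 0 j); rewrite !mxE.
Qed.

Lemma wit_m m (S : 'M[R]_m.+1) d : (forall i j, S i j = S j i) -> irreducible_mx S ->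
  (forall i j, i != j -> sgn d i * S i j * sgn d j <= 0) -> mr_rank S m.
Proof.
move=> Hs' Hirr Hsgn.
pose Sh0 : 'M[R]_m.+1 := \matrix_(i, j) if i == j then
   \sum_(k | k != i) - (sgn d i * S i k * sgn d k) else S i j.
have hdiag : is_diag_mx (S - Sh0).
  apply/is_diag_mxP => i j hij; have hij2 : (i == j) = false by apply/negbTE.
  by rewrite !mxE hij2 subrr.
have hsym : symmetric_mx Sh0.
  by apply/matrixP => i j; rewrite !mxE eq_sym; case: eqVneq => [->|] //; rewrite Hs'.
have hpsd : psd_mx Sh0.
  move=> x; rewrite qfE; set f := fun i => x i 0.
  pose F := fun i j : 'I_m.+1 => if j == i then 0 else
     (- (sgn d i * S i j * sgn d j) * f i ^+ 2 + f i * S i j * f j).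
  have e1 : qf Sh0 f = \sum_i \sum_j F i j.
    apply: eq_bigr => i _.
    rewrite (bigD1 i) //= [RHS](bigD1 i) //= /F eqxx add0r mxE eqxx.
    under [RHS]eq_bigr => j hj do rewrite (negbTE hj).
    rewrite big_split /=; congr (_ + _).
      have -> : forall X, f i * X * f i = X * f i ^+2 by move=> X; ring.
      by rewrite mulr_suml.
    by apply: eq_bigr => j hj; rewrite mxE eq_sym (negbTE hj).
  have e2 : 2 * \sum_i \sum_j F i j = \sum_i \sum_j (F i j + F j i).
    rewrite mulr_natl mulr2n {2}exchange_big -big_split /=.
    by apply: eq_bigr => i _; rewrite -big_split.
  have e3 : 0 <= \sum_i \sum_j (F i j + F j i).
    apply: sumr_ge0 => i _; apply: sumr_ge0 => j _; rewrite /F.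
    case: ifP => [/eqP hji|hji]; case: ifP => [/eqP hij|hij].
    - by rewrite addr0.
    - by subst j; rewrite eqxx in hij.
    - by subst j; rewrite eqxx in hji.
    rewrite (Hs' j i).
    have hc := Hsgn i j (negbT hij).
    have hsq := sqr_ge0 (f i + f j); have hsq2 := sqr_ge0 (f i - f j).
    move: hc; rewrite /sgn; case: (d i); case: (d j) => hc; nra.
  by have := e3; rewrite -e2 -e1; lra.
have hdec : mr_rank S (\rank Sh0).
  by exists (S - Sh0), Sh0; rewrite subrK.
have hlb := lb_m Hs' Hirr Hsgn hdec.
suff hub : (\rank Sh0 <= m)%N.
  have e : \rank Sh0 = m by apply/eqP; rewrite eqn_leq hlb hub.
  by rewrite e in hdec.
apply: (@rank_ub _ _ (\row_i sgn d i)).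
  by apply/eqP => /rowP/(_ ord0); rewrite !mxE; apply/eqP; apply: sgn_neq0.
apply/rowP => j; rewrite !mxE (bigD1 j) //= /Sh0 !mxE eqxx mulr_sumr -big_split /=.
apply: big1 => i hi; rewrite !mxE; case: ifP => [/eqP hij|_]; first by move: hi; rewrite hij eqxx.
rewrite (Hs' i j).
have h := sgnK d j.
transitivity (- (sgn d j * sgn d j) * S j i * sgn d i + sgn d i * S j i); first by ring.
by rewrite h; ring.
Qed.
End Aux.

Unset Implicit Arguments.
Theorem corollary2 (R : realType) (n : nat) (S : 'M[R]_n)
  (Hs : symmetric_mx S) (Hp : psd_mx S) :
  irreducible_mx S -> preceq_e0 S -> mr Hp Hs = (n - 1)%N.
Proof.
move: S Hs Hp; case: n => [|m] S Hs Hp Hirr [d Hd].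
  rewrite /mr; case: ex_minnP => r _ hmin.
  apply/eqP; rewrite -leqn0; apply: hmin; apply/asboolP.
  exists 0, S; split; first by apply/is_diag_mxP => i j _; rewrite mxE.
  by rewrite add0r; split=> //; split=> //; split=> //; apply/eqP; rewrite -leqn0 rank_leq_row.
have Hs' : forall i j, S i j = S j i by move=> i j; rewrite -{1}Hs mxE.
have Hsgn : forall i j, i != j -> @sgn R _ d i * S i j * @sgn R _ d j <= 0.
  by move=> i j h; rewrite -signE; apply: Hd.
rewrite /mr; case: ex_minnP => r /asboolP hr hmin.
rewrite subn1 /=; apply/eqP; rewrite eqn_leq (lb_m Hs' Hirr Hsgn hr) andbT.
by apply: hmin; apply/asboolP; apply: wit_m Hs' Hirr Hsgn.
Qed.
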